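(* Consider the downtown bathtub model described in the context with a fixed number $N_s>0$ of suburban commuters, and assume hypercongestion, i.e. that the equilibrium quantity $\theta=\frac{C_s^{b*}v_f}{\alpha L}$ satisfies $\theta>2$. Then: (i) the short-run equilibrium bathtub cost $C_s^{b*}$ is uniquely determined (there is exactly one $\theta>2$ with $N_s=\alpha n_j(\frac1\beta+\frac1\gamma)(\ln\theta+\frac1\theta-1)$); (ii) the introduction of autonomous vehicles, i.e. replacing $\alpha$ by $\eta\alpha$ and $n_j$ by $\xi n_j$ with $\frac{\beta}{\alpha}<\eta\le 1$ and $\xi\ge 1$, may increase or may decrease the short-run equilibrium bathtub cost: there are admissible parameter values for which it increases and admissible parameter values for which it decreases.
   Context: Downtown traffic (bathtub model): the vehicle accumulation $n(t)\ge 0$ in the downtown area evolves as $\dot n(t)=I(t)-G(t)$, with inflow $I(t)$ and outflow $G(t)=n(t)v(t)/L$, where $L>0$ is the downtown trip length and $v(t)=v_f(1-n(t)/n_j)$ (Greenshields), $v_f>0$ free-flow speed, $n_j>0$ jam accumulation. The downtown travel time of a commuter arriving at time $t$ is $T(t)=L/v(t)$. A suburban commuter arriving at work at time $t$ incurs bathtub cost $C_s^b(t)=\alpha T(t)+s(t)$ with $s(t)=\beta(t^*-t)$ for $t\le t^*$ and $s(t)=\gamma(t-t^* )$ for $t>t^*$, where $\alpha,\beta,\gamma>0$ and $t^*$ is the desired arrival time. A short-run equilibrium is a path $n(\cdot)$ and a number $C_s^{b*}$ with $C_s^b(t)=C_s^{b*}$ whenever $n(t)>0$, $C_s^b(t)\ge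 C_s^{b*}$ whenever $n(t)=0$, and $\int_{\mathbb{R}} n(t)v(t)/L\,dt=N_s$. Autonomous vehicles are modelled by a value-of-time reduction $\alpha\mapsto\eta\alpha$ ($\beta/\alpha<\eta\le1$) and a network capacity increase $n_j\mapsto\xi n_j$ ($\xi\ge1$), all other parameters unchanged. *)

(* Defs.v *)
From Stdlib Require Import Reals Lra.
From Coquelicot Require Import Coquelicot.
Open Scope R_scope.

Definition speed (vf nj n : R) : R := vf * (1 - n / nj).

Definition sched (beta gamma tstar t : R) : R :=
  if Rle_dec t tstar then beta * (tstar - t) else gamma * (t - tstar).

Definition travel_time (L vf nj : R) (n : R -> R) (t : R) : R :=
  L / speed vf nj (n t).

Definition bathtub_cost (alpha beta gamma tstar L vf nj : R) (n : R -> R) (t : R) : R :=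
  alpha * travel_time L vf nj n t + sched beta gamma tstar t.

Definition outflow (L vf nj : R) (n : R -> R) (t : R) : R :=
  n t * speed vf nj (n t) / L.

(* Short-run equilibrium: path n and cost Cstar.  The inflow I is
   implicitly I = dn/dt + G and is not otherwise constrained. *)
Definition is_equilibrium (alpha beta gamma tstar L vf nj Ns : R)
    (n : R -> R) (Cstar : R) : Prop :=
  (forall t, 0 <= n t < nj) /\
  (forall t, 0 < n t -> bathtub_cost alpha beta gamma tstar L vf nj n t = Cstar) /\
  (forall t, n t = 0 -> bathtub_cost alpha beta gamma tstar L vf nj n t >= Cstar) /\
  is_RInt_gen (outflow L vf nj n) (Rbar_locally m_infty) (Rbar_locally p_infty) Ns.

Definition theta (alpha L vf Cstar : R) : R := Cstar * vf / (alpha * L).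

Definition eq_rhs (alpha beta gamma nj th : R) : R :=
  alpha * nj * (1 / beta + 1 / gamma) * (ln th + 1 / th - 1).

(* Main.v *)
Require Import Defs.
From Stdlib Require Import Reals Lra FunctionalExtensionality.
From Coquelicot Require Import Coquelicot.
Open Scope R_scope.

Lemma zero_left (f : R -> R) (a : R) :
  (forall x, x < a -> f x = 0) ->
  is_RInt_gen f (Rbar_locally m_infty) (at_point a) 0.
Proof.
  intros Hf.
  set (Fa := Rbar_locally m_infty). set (Fb := at_point a).
  apply (is_RInt_gen_ext (Derive (fun _ => 0))).
  - apply (Filter_prod _ _ _ (fun x => x < a) (fun y => y = a)).
    + exists a; auto.
    + reflexivity.
    + intros x y Hx Hy z Hz; simpl in *. subst y.
      rewrite Derive_const. symmetry; apply Hf.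
      rewrite Rmax_right in Hz by lra. lra.
  - cut (is_RInt_gen (Derive (fun _ : R => 0)) Fa Fb (0 - 0)).
    { rewrite Rminus_0_r; auto. }
    apply is_RInt_gen_Derive.
    + apply filter_forall; intros; apply ex_derive_const.
    + apply filter_forall; intros.
      apply (continuous_ext (fun _ => 0)). intros; rewrite Derive_const; auto.
      apply continuous_const.
    + apply filterlim_const.
    + apply filterlim_const.
Qed.

Lemma zero_right (f : R -> R) (b : R) :
  (forall x, b < x -> f x = 0) ->
  is_RInt_gen f (at_point b) (Rbar_locally p_infty) 0.
Proof.
  intros Hf.
  set (Fb := Rbar_locally p_infty). set (Fa := at_point b).
  apply (is_RInt_gen_ext (Derive (fun _ => 0))).
  - apply (Filter_prod _ _ _ (fun y => y = b) (fun x => b < x)).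
    + reflexivity.
    + exists b; auto.
    + intros y x Hy Hx z Hz; simpl in *. subst y.
      rewrite Derive_const. symmetry; apply Hf.
      rewrite Rmin_left in Hz by lra. lra.
  - cut (is_RInt_gen (Derive (fun _ : R => 0)) Fa Fb (0 - 0)).
    { rewrite Rminus_0_r; auto. }
    apply is_RInt_gen_Derive.
    + apply filter_forall; intros; apply ex_derive_const.
    + apply filter_forall; intros.
      apply (continuous_ext (fun _ => 0)). intros; rewrite Derive_const; auto.
      apply continuous_const.
    + apply filterlim_const.
    + apply filterlim_const.
Qed.

Lemma gen_unique (f : R -> R) (l1 l2 : R) :
  is_RInt_gen f (Rbar_locally m_infty) (Rbar_locally p_infty) l1 ->
  is_RInt_gen f (Rbar_locally m_infty) (Rbar_locally p_infty) l2 -> l1 = l2.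
Proof.
  intros H1 H2.
  pose proof (@is_RInt_gen_unique R_CompleteNormedModule _ _ _ _ f l1 H1).
  pose proof (@is_RInt_gen_unique R_CompleteNormedModule _ _ _ _ f l2 H2).
  congruence.
Qed.

Lemma ln_lt_xm1 z : 0 < z -> z <> 1 -> ln z < z - 1.
Proof.
  intros Hz H1. assert (ln z <> 0).
  { intro E. apply H1. rewrite <- (exp_ln z Hz), E. apply exp_0. }
  pose proof (exp_ineq1 _ H). rewrite exp_ln in H0 by auto. lra.
Qed.

Definition ff (x : R) := ln x + 1 / x - 1.

Lemma ff_strict x y : 1 <= x -> x < y -> ff x < ff y.
Proof.
  intros Hx Hxy. unfold ff.
  assert (Hl : ln (x / y) < x / y - 1).
  { apply ln_lt_xm1. apply Rdiv_lt_0_compat; lra.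
    intro E. assert (x = y). { field_simplify_eq in E; lra. } lra. }
  rewrite ln_div in Hl by lra.
  assert (0 <= 1 - x / y + 1 / y - 1 / x).
  { replace (1 - x / y + 1 / y - 1 / x) with ((y - x) * (x - 1) / (x * y)) by (field; lra).
    apply Rmult_le_pos. nra. left; apply Rinv_0_lt_compat; nra. }
  lra.
Qed.

Lemma ff_1 : ff 1 = 0.
Proof. unfold ff. rewrite ln_1. field. Qed.

Lemma ff_inj x y : 1 <= x -> 1 <= y -> ff x = ff y -> x = y.
Proof.
  intros Hx Hy E. destruct (Rtotal_order x y) as [H|[H|H]]; auto.
  - apply ff_strict in H; lra.
  - apply ff_strict in H; lra.
Qed.

Definition nstar (alpha beta gamma tstar L vf nj C : R) (t : R) : R :=
  if Rlt_dec (sched beta gamma tstar t) (C - alpha * L / vf)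
  then nj * (1 - alpha * L / (vf * (C - sched beta gamma tstar t))) else 0.

Lemma sched_nonneg beta gamma tstar t : 0 < beta -> 0 < gamma -> 0 <= sched beta gamma tstar t.
Proof. intros. unfold sched. destruct Rle_dec; nra. Qed.

Lemma char alpha beta gamma tstar L vf nj Ns n C :
  0 < alpha -> 0 < L -> 0 < vf -> 0 < nj ->
  is_equilibrium alpha beta gamma tstar L vf nj Ns n C ->
  forall t, n t = nstar alpha beta gamma tstar L vf nj C t.
Proof.
  intros Ha HL Hv Hn [Hb [Hp [Hz _]]] t.
  unfold nstar. set (s := sched beta gamma tstar t).
  destruct (Hb t) as [H0 H1].
  destruct H0 as [Hpos | Hzero].
  - specialize (Hp t Hpos). unfold bathtub_cost, travel_time, speed in Hp. fold s in Hp.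
    set (q := 1 - n t / nj) in Hp.
    assert (Hq0 : 0 < q). { unfold q. assert (n t / nj < 1). { apply (Rmult_lt_reg_r nj); [lra|].
      unfold Rdiv; rewrite Rmult_assoc, Rinv_l by lra; lra. } lra. }
    assert (Hq1 : q < 1). { unfold q. assert (0 < n t / nj) by (apply Rdiv_lt_0_compat; lra). lra. }
    assert (Hcs : C - s = alpha * L / (vf * q)). { rewrite <- Hp. field. lra. }
    assert (HK : alpha * L / vf < C - s).
    { rewrite Hcs. unfold Rdiv. rewrite Rinv_mult.
      rewrite <- (Rmult_1_r (alpha * L * / vf)) at 1. rewrite <- Rmult_assoc.
      apply Rmult_lt_compat_l. apply Rmult_lt_0_compat. nra. apply Rinv_0_lt_compat; lra.
      rewrite <- Rinv_1. apply Rinv_lt_contravar; lra. }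
    destruct Rlt_dec as [_|Hn']; [|lra].
    rewrite Hcs. unfold q. field. repeat split; lra.
  - symmetry in Hzero. specialize (Hz t Hzero). unfold bathtub_cost, travel_time, speed in Hz. fold s in Hz.
    rewrite Hzero in Hz |- *. destruct Rlt_dec as [Hl|_]; auto.
    exfalso. replace (0 / nj) with 0 in Hz by (field; lra).
    replace (alpha * (L / (vf * (1 - 0)))) with (alpha * L / vf) in Hz by (field; lra). lra.
Qed.

Lemma nstar_props alpha beta gamma tstar L vf nj C :
  0 < alpha -> 0 < L -> 0 < vf -> 0 < nj ->
  let m := nstar alpha beta gamma tstar L vf nj C in
  (forall t, 0 <= m t < nj) /\
  (forall t, 0 < m t -> bathtub_cost alpha beta gamma tstar L vf nj m t = C) /\
  (forall t, m t = 0 -> bathtub_cost alpha beta gamma tstar L vf nj m t >= C).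
Proof.
  intros Ha HL Hv Hn m.
  assert (K : forall t, (sched beta gamma tstar t < C - alpha * L / vf /\
     m t = nj * (1 - alpha * L / (vf * (C - sched beta gamma tstar t))) /\
     0 < alpha * L / (vf * (C - sched beta gamma tstar t)) < 1)
     \/ (C - alpha * L / vf <= sched beta gamma tstar t /\ m t = 0)).
  { intro t. unfold m, nstar. set (s := sched beta gamma tstar t).
    destruct Rlt_dec as [Hl|Hl]; [left|right]; [|lra].
    split; [auto|split; [auto|]].
    assert (0 < alpha * L / vf) by (apply Rdiv_lt_0_compat; nra).
    assert (Hcs : 0 < C - s) by lra.
    split. apply Rdiv_lt_0_compat; nra.
    apply (Rmult_lt_reg_r (vf * (C - s))). nra.
    unfold Rdiv. rewrite Rmult_assoc, Rinv_l by nra. 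
    apply (Rmult_lt_reg_r (/ vf)). apply Rinv_0_lt_compat; lra.
    replace (1 * (vf * (C - s)) * / vf) with (C - s) by (field; lra).
    unfold Rdiv in Hl. lra. }
  split; [|split]; intro t; destruct (K t) as [[Hs [Hm Hx]]|[Hs Hm]].
  - rewrite Hm. split; nra.
  - rewrite Hm. lra.
  - intros _. unfold bathtub_cost, travel_time, speed. rewrite Hm.
    set (s := sched beta gamma tstar t) in *.
    set (x := alpha * L / (vf * (C - s))) in *.
    assert (E : 1 - nj * (1 - x) / nj = x) by (field; lra). rewrite E.
    unfold x. field. repeat split; try lra.
    intro E2. unfold x in Hx; rewrite E2 in Hx. unfold Rdiv in Hx.
    rewrite Rmult_0_r, Rinv_0, Rmult_0_r in Hx. lra.
  - intro E. rewrite Hm in E. lra.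
  - intro E. exfalso. rewrite Hm in E. nra.
  - intros _. unfold bathtub_cost, travel_time, speed. rewrite Hm.
    replace (alpha * (L / (vf * (1 - 0 / nj)))) with (alpha * L / vf) by (field; repeat split; lra). lra.
Qed.
Ltac toR := match goal with |- ?a = ?b => change (@eq R a b) end.

Lemma sched_left beta gamma tstar t : t <= tstar -> sched beta gamma tstar t = beta * (tstar - t).
Proof. intros. unfold sched. destruct Rle_dec; [auto|lra]. Qed.
Lemma sched_right beta gamma tstar t : tstar < t -> sched beta gamma tstar t = gamma * (t - tstar).
Proof. intros. unfold sched. destruct Rle_dec; [lra|auto]. Qed.

Lemma left_piece alpha beta gamma tstar L vf nj C :
  0 < alpha -> 0 < beta -> 0 < L -> 0 < vf -> 0 < nj -> alpha * L / vf < C ->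
  is_RInt (outflow L vf nj (nstar alpha beta gamma tstar L vf nj C))
    (tstar - (C - alpha * L / vf) / beta) tstar
    (alpha * nj / beta * (ln (C * vf / (alpha * L)) + 1 / (C * vf / (alpha * L)) - 1)).
Proof.
  intros Ha Hb HL Hv Hn HC.
  assert (HK0 : 0 < alpha * L / vf) by (apply Rdiv_lt_0_compat; nra).
  assert (HC0 : 0 < C) by lra.
  set (a := tstar - (C - alpha * L / vf) / beta).
  assert (Hat : a < tstar). { unfold a. assert (0 < (C - alpha * L / vf) / beta) by (apply Rdiv_lt_0_compat; lra). lra. }
  set (w := fun t => (C - beta * (tstar - t)) * vf / (alpha * L)).
  assert (Hw : forall x, a <= x -> 1 <= w x).
  { intros x Hx. unfold w, a in *.
    assert (beta * (tstar - x) <= C - alpha * L / vf).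
    { assert (tstar - x <= (C - alpha * L / vf) / beta) by lra.
      apply (Rmult_le_compat_l beta) in H; [|lra].
      replace (beta * ((C - alpha * L / vf) / beta)) with (C - alpha * L / vf) in H by (field; lra). lra. }
    apply (Rmult_le_reg_r (alpha * L / vf)). apply Rdiv_lt_0_compat; nra.
    replace ((C - beta * (tstar - x)) * vf / (alpha * L) * (alpha * L / vf)) with (C - beta * (tstar - x)) by (field; repeat split; lra).
    lra. }
  set (h := fun t => nj * vf / L * (1 / w t - 1 / (w t) ^ 2)).
  set (F := fun t => alpha * nj / beta * (ln (w t) + 1 / w t)).
  apply (is_RInt_ext h).
  - intros x Hx. rewrite Rmin_left in Hx by lra. rewrite Rmax_right in Hx by lra.
    unfold outflow, nstar, speed, h.
    rewrite sched_left by lra.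
    assert (Hx1 : 1 <= w x) by (apply Hw; lra).
    destruct Rlt_dec as [Hl|Hl].
    + assert (0 < alpha * L / vf) by (apply Rdiv_lt_0_compat; nra).
      assert (0 < C - beta * (tstar - x)) by lra.
      unfold w. change (@eq R (nj * vf / L * (1 / ((C - beta * (tstar - x)) * vf / (alpha * L)) - 1 / ((C - beta * (tstar - x)) * vf / (alpha * L)) ^ 2)) (nj * (1 - alpha * L / (vf * (C - beta * (tstar - x)))) * (vf * (1 - nj * (1 - alpha * L / (vf * (C - beta * (tstar - x)))) / nj)) / L)). field. repeat split; lra.
    + exfalso. apply Hl. unfold a in Hx.
      assert (tstar - x < (C - alpha * L / vf) / beta) by lra.
      apply (Rmult_lt_compat_l beta) in H; [|lra].
      replace (beta * ((C - alpha * L / vf) / beta)) with (C - alpha * L / vf) in H by (field; lra). lra.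
  - replace (alpha * nj / beta * (ln (C * vf / (alpha * L)) + 1 / (C * vf / (alpha * L)) - 1))
      with (minus (F tstar) (F a)).
    2: { unfold minus, plus, opp; simpl. unfold F.
         replace (w tstar) with (C * vf / (alpha * L)) by (unfold w; field; repeat split; lra).
         replace (w a) with 1 by (unfold w, a; field; repeat split; lra).
         rewrite ln_1. field. repeat split; lra. }
    apply (@is_RInt_derive R_CompleteNormedModule F h).
    + intros x Hx. rewrite Rmin_left in Hx by lra. rewrite Rmax_right in Hx by lra.
      assert (Hx1 : 1 <= w x) by (apply Hw; lra).
      assert (Hp : 0 < C - beta * (tstar - x)).
      { replace (C - beta * (tstar - x)) with (w x * (alpha * L / vf)) by (unfold w; field; repeat split; lra).
        apply Rmult_lt_0_compat; lra. }
      unfold F, h. unfold w at 1 2 3 4. auto_derive.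
      change ((C + - (beta * (tstar + - x))) * vf * / (alpha * L)) with (w x). repeat split; lra.
      unfold w. toR. field. repeat split; lra.
    + intros x Hx. rewrite Rmin_left in Hx by lra. rewrite Rmax_right in Hx by lra.
      assert (Hx1 : 1 <= w x) by (apply Hw; lra).
      apply (@ex_derive_continuous R_AbsRing R_NormedModule). unfold h. unfold w at 1 2. auto_derive.
      change ((C + - (beta * (tstar + - x))) * vf * / (alpha * L)) with (w x). repeat split; try lra; try nra.
Qed.

Lemma right_piece alpha beta gamma tstar L vf nj C :
  0 < alpha -> 0 < beta -> 0 < gamma -> 0 < L -> 0 < vf -> 0 < nj -> alpha * L / vf < C ->
  is_RInt (outflow L vf nj (nstar alpha beta gamma tstar L vf nj C))
    tstar (tstar + (C - alpha * L / vf) / gamma)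
    (alpha * nj / gamma * (ln (C * vf / (alpha * L)) + 1 / (C * vf / (alpha * L)) - 1)).
Proof.
  intros Ha Hb Hg HL Hv Hn HC.
  assert (HK0 : 0 < alpha * L / vf) by (apply Rdiv_lt_0_compat; nra).
  assert (HC0 : 0 < C) by lra.
  set (b := tstar + (C - alpha * L / vf) / gamma).
  assert (Hbt : tstar < b). { unfold b. assert (0 < (C - alpha * L / vf) / gamma) by (apply Rdiv_lt_0_compat; lra). lra. }
  set (w := fun t => (C - gamma * (t - tstar)) * vf / (alpha * L)).
  assert (Hw : forall x, x <= b -> 1 <= w x).
  { intros x Hx. unfold w, b in *.
    assert (gamma * (x - tstar) <= C - alpha * L / vf).
    { assert (x - tstar <= (C - alpha * L / vf) / gamma) by lra.
      apply (Rmult_le_compat_l gamma) in H; [|lra].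
      replace (gamma * ((C - alpha * L / vf) / gamma)) with (C - alpha * L / vf) in H by (field; lra). lra. }
    apply (Rmult_le_reg_r (alpha * L / vf)). apply Rdiv_lt_0_compat; nra.
    replace ((C - gamma * (x - tstar)) * vf / (alpha * L) * (alpha * L / vf)) with (C - gamma * (x - tstar)) by (field; repeat split; lra).
    lra. }
  set (h := fun t => nj * vf / L * (1 / w t - 1 / (w t) ^ 2)).
  set (F := fun t => - (alpha * nj / gamma) * (ln (w t) + 1 / w t)).
  apply (is_RInt_ext h).
  - intros x Hx. rewrite Rmin_left in Hx by lra. rewrite Rmax_right in Hx by lra.
    unfold outflow, nstar, speed, h.
    rewrite sched_right by lra.
    assert (Hx1 : 1 <= w x) by (apply Hw; lra).
    destruct Rlt_dec as [Hl|Hl].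
    + assert (0 < C - gamma * (x - tstar)) by lra.
      unfold w. toR. field. repeat split; lra.
    + exfalso. apply Hl. unfold b in Hx.
      assert (x - tstar < (C - alpha * L / vf) / gamma) by lra.
      apply (Rmult_lt_compat_l gamma) in H; [|lra].
      replace (gamma * ((C - alpha * L / vf) / gamma)) with (C - alpha * L / vf) in H by (field; lra). lra.
  - replace (alpha * nj / gamma * (ln (C * vf / (alpha * L)) + 1 / (C * vf / (alpha * L)) - 1))
      with (minus (F b) (F tstar)).
    2: { unfold minus, plus, opp; simpl. unfold F.
         replace (w tstar) with (C * vf / (alpha * L)) by (unfold w; field; repeat split; lra).
         replace (w b) with 1 by (unfold w, b; field; repeat split; lra).
         rewrite ln_1. field. repeat split; lra. }
    apply (@is_RInt_derive R_CompleteNormedModule F h).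
    + intros x Hx. rewrite Rmin_left in Hx by lra. rewrite Rmax_right in Hx by lra.
      assert (Hx1 : 1 <= w x) by (apply Hw; lra).
      assert (Hp : 0 < C - gamma * (x - tstar)).
      { replace (C - gamma * (x - tstar)) with (w x * (alpha * L / vf)) by (unfold w; field; repeat split; lra).
        apply Rmult_lt_0_compat; lra. }
      unfold F, h. unfold w at 1 2 3 4. auto_derive.
      change ((C + - (gamma * (x + - tstar))) * vf * / (alpha * L)) with (w x). repeat split; lra.
      unfold w. toR. field. repeat split; lra.
    + intros x Hx. rewrite Rmin_left in Hx by lra. rewrite Rmax_right in Hx by lra.
      assert (Hx1 : 1 <= w x) by (apply Hw; lra).
      apply (@ex_derive_continuous R_AbsRing R_NormedModule). unfold h. unfold w at 1 2. auto_derive.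
      change ((C + - (gamma * (x + - tstar))) * vf * / (alpha * L)) with (w x). repeat split; try lra; try nra.
Qed.

Lemma integral_pos alpha beta gamma tstar L vf nj C :
  0 < alpha -> 0 < beta -> 0 < gamma -> 0 < L -> 0 < vf -> 0 < nj -> alpha * L / vf < C ->
  is_RInt_gen (outflow L vf nj (nstar alpha beta gamma tstar L vf nj C))
    (Rbar_locally m_infty) (Rbar_locally p_infty)
    (eq_rhs alpha beta gamma nj (C * vf / (alpha * L))).
Proof.
  intros Ha Hb Hg HL Hv Hn HC.
  set (f := outflow L vf nj (nstar alpha beta gamma tstar L vf nj C)).
  set (D := C - alpha * L / vf).
  assert (HD : 0 < D) by (unfold D; lra).
  set (a := tstar - D / beta). set (b := tstar + D / gamma).
  assert (Ha' : 0 < D / beta) by (apply Rdiv_lt_0_compat; lra).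
  assert (Hb' : 0 < D / gamma) by (apply Rdiv_lt_0_compat; lra).
  set (th := C * vf / (alpha * L)).
  pose proof (left_piece alpha beta gamma tstar L vf nj C Ha Hb HL Hv Hn HC) as G2.
  pose proof (right_piece alpha beta gamma tstar L vf nj C Ha Hb Hg HL Hv Hn HC) as G3.
  fold f D a th in G2. fold f D b th in G3.
  apply is_RInt_gen_at_point in G2. apply is_RInt_gen_at_point in G3.
  assert (G1 : is_RInt_gen f (Rbar_locally m_infty) (at_point a) 0).
  { apply zero_left. intros x Hx. unfold a in Hx. unfold f, outflow, nstar.
    rewrite sched_left by lra. destruct Rlt_dec as [Hl|_]; [|unfold Rdiv; ring].
    exfalso. unfold a in Hx. fold D in Hl.
    assert (D / beta < tstar - x) by lra.
    apply (Rmult_lt_compat_l beta) in H; [|lra].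
    replace (beta * (D / beta)) with D in H by (field; lra). lra. }
  assert (G4 : is_RInt_gen f (at_point b) (Rbar_locally p_infty) 0).
  { apply zero_right. intros x Hx. unfold b in Hx. unfold f, outflow, nstar.
    rewrite sched_right by lra. destruct Rlt_dec as [Hl|_]; [|unfold Rdiv; ring].
    exfalso. unfold b in Hx. fold D in Hl.
    assert (D / gamma < x - tstar) by lra.
    apply (Rmult_lt_compat_l gamma) in H; [|lra].
    replace (gamma * (D / gamma)) with D in H by (field; lra). lra. }
  pose proof (is_RInt_gen_Chasles _ _ _ _ G1 G2) as G12.
  pose proof (is_RInt_gen_Chasles _ _ _ _ G12 G3) as G123.
  pose proof (is_RInt_gen_Chasles _ _ _ _ G123 G4) as G.
  replace (eq_rhs alpha beta gamma nj th) with
    (plus (plus (plus 0 (alpha * nj / beta * (ln th + 1 / th - 1)))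
      (alpha * nj / gamma * (ln th + 1 / th - 1))) 0); auto.
  unfold plus; simpl. unfold eq_rhs. assert (0 < th) by (unfold th; assert (0 < alpha * L / vf) by (apply Rdiv_lt_0_compat; nra); apply Rdiv_lt_0_compat; nra). field. repeat split; lra.
Qed.

Lemma integral_zero alpha beta gamma tstar L vf nj C :
  0 < beta -> 0 < gamma -> C <= alpha * L / vf ->
  is_RInt_gen (outflow L vf nj (nstar alpha beta gamma tstar L vf nj C))
    (Rbar_locally m_infty) (Rbar_locally p_infty) 0.
Proof.
  intros Hb Hg HC.
  assert (Z : forall x, outflow L vf nj (nstar alpha beta gamma tstar L vf nj C) x = 0).
  { intro x. unfold outflow, nstar. pose proof (sched_nonneg beta gamma tstar x Hb Hg).
    destruct Rlt_dec; [lra|]. unfold Rdiv. ring. }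
  assert (G1 := zero_left (outflow L vf nj (nstar alpha beta gamma tstar L vf nj C)) 0 (fun x _ => Z x)).
  assert (G2 := zero_right (outflow L vf nj (nstar alpha beta gamma tstar L vf nj C)) 0 (fun x _ => Z x)).
  pose proof (is_RInt_gen_Chasles _ _ _ _ G1 G2) as G.
  match type of G with is_RInt_gen _ _ _ ?v => replace v with 0 in G by (unfold plus; simpl; ring) end. exact G.
Qed.

Lemma eq_value alpha beta gamma tstar L vf nj Ns n C :
  0 < alpha -> 0 < beta -> 0 < gamma -> 0 < L -> 0 < vf -> 0 < nj -> 0 < Ns ->
  is_equilibrium alpha beta gamma tstar L vf nj Ns n C ->
  alpha * L / vf < C /\ Ns = eq_rhs alpha beta gamma nj (theta alpha L vf C).
Proof.
  intros Ha Hb Hg HL Hv Hn HN H.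
  assert (En : n = nstar alpha beta gamma tstar L vf nj C).
  { apply functional_extensionality. intro t. eapply char; eauto. }
  destruct H as [_ [_ [_ Hint]]]. rewrite En in Hint.
  destruct (Rle_lt_dec C (alpha * L / vf)) as [Hc|Hc].
  - exfalso. pose proof (integral_zero alpha beta gamma tstar L vf nj C Hb Hg Hc) as Z.
    pose proof (gen_unique _ _ _ Hint Z). lra.
  - split; auto.
    pose proof (integral_pos alpha beta gamma tstar L vf nj C Ha Hb Hg HL Hv Hn Hc) as P.
    exact (gen_unique _ _ _ Hint P).
Qed.

Lemma eq_rhs_ff alpha beta gamma nj x :
  eq_rhs alpha beta gamma nj x = alpha * nj * (1 / beta + 1 / gamma) * ff x.
Proof. reflexivity. Qed.

Lemma eq_rhs_inj alpha beta gamma nj x y :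
  0 < alpha -> 0 < beta -> 0 < gamma -> 0 < nj -> 1 <= x -> 1 <= y ->
  eq_rhs alpha beta gamma nj x = eq_rhs alpha beta gamma nj y -> x = y.
Proof.
  intros Ha Hb Hg Hn Hx Hy E. rewrite !eq_rhs_ff in E.
  apply ff_inj; auto.
  assert (0 < alpha * nj * (1 / beta + 1 / gamma)).
  { apply Rmult_lt_0_compat. nra. assert (0 < 1/beta) by (apply Rdiv_lt_0_compat; lra).
    assert (0 < 1/gamma) by (apply Rdiv_lt_0_compat; lra). lra. }
  apply (Rmult_eq_reg_l _ _ _ E). lra.
Qed.

Lemma theta_gt1 alpha L vf C : 0 < alpha -> 0 < L -> 0 < vf -> alpha * L / vf < C -> 1 < theta alpha L vf C.
Proof.
  intros Ha HL Hv HC. unfold theta.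
  apply (Rmult_lt_reg_r (alpha * L / vf)). apply Rdiv_lt_0_compat; nra.
  replace (C * vf / (alpha * L) * (alpha * L / vf)) with C by (field; repeat split; lra). lra.
Qed.

Lemma theta_inj alpha L vf C C' : 0 < alpha -> 0 < L -> 0 < vf ->
  theta alpha L vf C = theta alpha L vf C' -> C = C'.
Proof.
  intros Ha HL Hv E. unfold theta in E.
  apply (Rmult_eq_reg_r (vf / (alpha * L))). 2: { apply Rgt_not_eq, Rdiv_lt_0_compat; nra. }
  unfold Rdiv in *. lra.
Qed.

Lemma construct alpha beta gamma tstar L vf nj th :
  0 < alpha -> 0 < beta -> 0 < gamma -> 0 < L -> 0 < vf -> 0 < nj -> 1 < th ->
  is_equilibrium alpha beta gamma tstar L vf nj (eq_rhs alpha beta gamma nj th)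
    (nstar alpha beta gamma tstar L vf nj (th * alpha * L / vf)) (th * alpha * L / vf)
  /\ theta alpha L vf (th * alpha * L / vf) = th.
Proof.
  intros Ha Hb Hg HL Hv Hn Hth.
  assert (Et : theta alpha L vf (th * alpha * L / vf) = th) by (unfold theta; field; repeat split; lra).
  split; auto.
  destruct (nstar_props alpha beta gamma tstar L vf nj (th * alpha * L / vf) Ha HL Hv Hn) as [P1 [P2 P3]].
  split; [exact P1|split; [exact P2|split; [exact P3|]]].
  assert (HC : alpha * L / vf < th * alpha * L / vf).
  { replace (th * alpha * L / vf) with (th * (alpha * L / vf)) by (field; lra).
    assert (0 < alpha * L / vf) by (apply Rdiv_lt_0_compat; nra). nra. }
  pose proof (integral_pos alpha beta gamma tstar L vf nj _ Ha Hb Hg HL Hv Hn HC) as P.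
  unfold theta in Et. rewrite Et in P. exact P.
Qed.

Lemma exp_facts : exists e u, 2 < e /\ 0 < u /\ e * u = 1 /\
  exp 2 = e * e /\ exp 3 = e * e * e /\ ff (exp 2) = 1 + u * u /\ ff (exp 3) = 2 + u * u * u.
Proof.
  exists (exp 1), (/ exp 1).
  assert (He : 2 < exp 1) by (pose proof (exp_ineq1 1 ltac:(lra)); lra).
  assert (E2 : exp 2 = exp 1 * exp 1) by (rewrite <- exp_plus; f_equal; lra).
  assert (E3 : exp 3 = exp 1 * exp 1 * exp 1) by (rewrite <- !exp_plus; f_equal; lra).
  split; [auto|]. split; [apply Rinv_0_lt_compat; lra|]. split; [field; lra|].
  split; [auto|]. split; [auto|]. unfold ff. rewrite !ln_exp. rewrite E2, E3.
  split; field; lra.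
Qed.

Theorem proposition1 :
  (* (i) uniqueness of the hypercongested short-run equilibrium cost *)
  (forall (alpha beta gamma tstar L vf nj Ns : R),
     0 < alpha -> 0 < beta -> 0 < gamma -> 0 < L -> 0 < vf -> 0 < nj -> 0 < Ns ->
     forall (n : R -> R) (Cstar : R),
       is_equilibrium alpha beta gamma tstar L vf nj Ns n Cstar ->
       theta alpha L vf Cstar > 2 ->
       Ns = eq_rhs alpha beta gamma nj (theta alpha L vf Cstar) /\
       (exists! th : R, th > 2 /\ Ns = eq_rhs alpha beta gamma nj th) /\
       (forall (n' : R -> R) (C' : R),
          is_equilibrium alpha beta gamma tstar L vf nj Ns n' C' -> C' = Cstar)) /\
  (* (ii) autonomous vehicles (alpha -> eta alpha, n_j -> xi n_j) may increase
     the equilibrium cost ... *)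
  (exists (alpha beta gamma tstar L vf nj Ns eta xi : R),
     0 < alpha /\ 0 < beta /\ 0 < gamma /\ 0 < L /\ 0 < vf /\ 0 < nj /\ 0 < Ns /\
     beta / alpha < eta /\ eta <= 1 /\ 1 <= xi /\
     exists (n : R -> R) (C : R) (n' : R -> R) (C' : R),
       is_equilibrium alpha beta gamma tstar L vf nj Ns n C /\
       theta alpha L vf C > 2 /\
       is_equilibrium (eta * alpha) beta gamma tstar L vf (xi * nj) Ns n' C' /\
       theta (eta * alpha) L vf C' > 2 /\
       C < C') /\
  (* ... and may decrease it *)
  (exists (alpha beta gamma tstar L vf nj Ns eta xi : R),
     0 < alpha /\ 0 < beta /\ 0 < gamma /\ 0 < L /\ 0 < vf /\ 0 < nj /\ 0 < Ns /\
     beta / alpha < eta /\ eta <= 1 /\ 1 <= xi /\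
     exists (n : R -> R) (C : R) (n' : R -> R) (C' : R),
       is_equilibrium alpha beta gamma tstar L vf nj Ns n C /\
       theta alpha L vf C > 2 /\
       is_equilibrium (eta * alpha) beta gamma tstar L vf (xi * nj) Ns n' C' /\
       theta (eta * alpha) L vf C' > 2 /\
       C' < C).
Proof.
  split; [|split].
  - intros alpha beta gamma tstar L vf nj Ns Ha Hb Hg HL Hv Hn HN n C Heq Hth.
    destruct (eq_value _ _ _ _ _ _ _ _ _ _ Ha Hb Hg HL Hv Hn HN Heq) as [HC HNs].
    split; [exact HNs|split].
    + exists (theta alpha L vf C). split; [split; auto|].
      intros th' [Hth' HN'].
      apply (eq_rhs_inj alpha beta gamma nj); auto; try lra. try congruence.
    + intros n' C' Heq'.
      destruct (eq_value _ _ _ _ _ _ _ _ _ _ Ha Hb Hg HL Hv Hn HN Heq') as [HC' HNs'].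
      pose proof (theta_gt1 _ _ _ _ Ha HL Hv HC').
      apply (theta_inj alpha L vf); auto.
      apply (eq_rhs_inj alpha beta gamma nj); auto; try lra; try congruence.
  - destruct exp_facts as [e [u [He [Hu [Heu [E2 [E3 [F2 F3]]]]]]]].
    set (eta := ff (exp 2) / ff (exp 3)).
    assert (Hf3 : 0 < ff (exp 3)) by nra.
    assert (Heta : eta * ff (exp 3) = ff (exp 2)) by (unfold eta; field; lra).
    assert (He2 : 1 < exp 2) by nra. assert (He3 : 1 < exp 3) by nra.
    destruct (construct 1 (1/4) 1 0 1 1 1 (exp 2) ltac:(lra) ltac:(lra) ltac:(lra) ltac:(lra) ltac:(lra) ltac:(lra) He2) as [Q1 T1].
    assert (Hetap : 0 < eta) by (unfold eta; apply Rdiv_lt_0_compat; nra).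
    destruct (construct (eta * 1) (1/4) 1 0 1 1 (1 * 1) (exp 3) ltac:(lra) ltac:(lra) ltac:(lra) ltac:(lra) ltac:(lra) ltac:(lra) He3) as [Q2 T2].
    exists 1, (1/4), 1, 0, 1, 1, 1, (eq_rhs 1 (1/4) 1 1 (exp 2)), eta, 1.
    assert (EN : eq_rhs (eta * 1) (1/4) 1 (1 * 1) (exp 3) = eq_rhs 1 (1/4) 1 1 (exp 2)).
    { rewrite !eq_rhs_ff. replace (ff (exp 2)) with (eta * ff (exp 3)). ring. }
    rewrite EN in Q2.
    repeat split; try lra.
    + rewrite eq_rhs_ff. nra.
    + apply (Rmult_lt_reg_r (ff (exp 3))); auto. rewrite Heta. rewrite F2, F3. assert (u < 1/2) by nra. nra.
    + apply (Rmult_le_reg_r (ff (exp 3))); auto. rewrite Heta. rewrite F2, F3. assert (u < 1/2) by nra. nra.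
    + do 4 eexists. split; [exact Q1|]. split; [rewrite T1, E2; nra|]. split; [exact Q2|]. split; [rewrite T2, E3; nra|].
      apply (Rmult_lt_reg_r (ff (exp 3))); auto.
      replace (exp 3 * (eta * 1) * 1 / 1 * ff (exp 3)) with (exp 3 * ff (exp 2)) by (replace (ff (exp 2)) with (eta * ff (exp 3)); field).
      replace (exp 2 * 1 * 1 / 1 * ff (exp 3)) with (exp 2 * ff (exp 3)) by field.
      rewrite F2, F3, E2, E3.
      assert (u < 1/2) by nra. assert (A1 : e * e * (2 + u * u * u) = 2 * e * e + u) by (replace (e * e * (2 + u * u * u)) with (2 * e * e + (e * u) * (e * u) * u) by ring; rewrite Heu; ring). assert (A2 : e * e * e * (1 + u * u) = e * e * e + e) by (replace (e * e * e * (1 + u * u)) with (e * e * e + (e * u) * (e * u) * e) by ring; rewrite Heu; ring). rewrite A1, A2. assert (1 < (e - 1) * (e - 1)) by nra. assert (2 < e * ((e - 1) * (e - 1))) by nra. nra.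
  - destruct exp_facts as [e [u [He [Hu [Heu [E2 [E3 [F2 F3]]]]]]]].
    set (xi := ff (exp 3) / ff (exp 2)).
    assert (Hf2 : 0 < ff (exp 2)) by nra.
    assert (Hxi : xi * ff (exp 2) = ff (exp 3)) by (unfold xi; field; lra).
    assert (He2 : 1 < exp 2) by nra. assert (He3 : 1 < exp 3) by nra.
    assert (Hxip : 0 < xi) by (unfold xi; apply Rdiv_lt_0_compat; nra).
    destruct (construct 1 (1/4) 1 0 1 1 1 (exp 3) ltac:(lra) ltac:(lra) ltac:(lra) ltac:(lra) ltac:(lra) ltac:(lra) He3) as [Q1 T1].
    destruct (construct (1 * 1) (1/4) 1 0 1 1 (xi * 1) (exp 2) ltac:(lra) ltac:(lra) ltac:(lra) ltac:(lra) ltac:(lra) ltac:(lra) He2) as [Q2 T2].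
    exists 1, (1/4), 1, 0, 1, 1, 1, (eq_rhs 1 (1/4) 1 1 (exp 3)), 1, xi.
    assert (EN : eq_rhs (1 * 1) (1/4) 1 (xi * 1) (exp 2) = eq_rhs 1 (1/4) 1 1 (exp 3)).
    { rewrite !eq_rhs_ff. replace (ff (exp 3)) with (xi * ff (exp 2)). ring. }
    rewrite EN in Q2.
    repeat split; try lra.
    + rewrite eq_rhs_ff. nra.
    + apply (Rmult_le_reg_r (ff (exp 2))); auto. rewrite Hxi. rewrite F2, F3.
      assert (u < 1/2) by nra. nra.
    + do 4 eexists. split; [exact Q1|]. split; [rewrite T1, E3; nra|]. split; [exact Q2|]. split; [rewrite T2, E2; nra|].
      rewrite E2, E3. nra.
Qed.
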